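(* Let $p>1$. For any feasible $\mathbf b$-flow $\mathbf f$, we have $\mathcal E(\mathbf f)\ge\frac1p\left(\frac{\|\mathbf b\|_\infty}n\right)^p\|\mathbf r\|_{-\infty}$.
   Context: $G=(V,E)$ is a simple undirected graph with $n$ vertices, weights $r(e)>0$, and fixed orientation $\vec E$ (with $f(j,i)=-f(i,j)$). $\mathbf b\in\mathbb R^V$ with $\sum_ib(i)=0$; a $\mathbf b$-flow has net outflow $b(i)$ at every vertex $i$. $\mathcal E(\mathbf f)=\frac1p\sum_{e\in\vec E}r(e)|f(e)|^p$. For a vector $\mathbf v$, $\|\mathbf v\|_\infty=\max_i|v(i)|$ and $\|\mathbf v\|_{-\infty}=\min_i|v(i)|$. *)

(* Defs.v *)
From HB Require Import structures.
From mathcomp Require Import all_boot all_order all_algebra.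
From mathcomp Require Import reals exp.
Set Implicit Arguments. Unset Strict Implicit. Unset Printing Implicit Defensive.
Import Order.TTheory GRing.Theory Num.Theory.
Local Open Scope ring_scope.

Definition oriented_simple_graph (n : nat) (E : {set 'I_n * 'I_n}) : Prop :=
  (forall e, e \in E -> e.1 != e.2) /\
  (forall i j, (i, j) \in E -> (j, i) \notin E).

Definition net_outflow {R : numDomainType} (n : nat) (E : {set 'I_n * 'I_n})
  (f : 'I_n * 'I_n -> R) (i : 'I_n) : R :=
  \sum_(e in E | e.1 == i) f e - \sum_(e in E | e.2 == i) f e.

Definition is_bflow {R : numDomainType} (n : nat) (E : {set 'I_n * 'I_n})
  (b : 'I_n -> R) (f : 'I_n * 'I_n -> R) : Prop :=
  forall i, net_outflow E f i = b i.

Definition energy {R : realType} (n : nat) (E : {set 'I_n * 'I_n})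
  (r f : 'I_n * 'I_n -> R) (p : R) : R :=
  p^-1 * \sum_(e in E) r e * powR `|f e| p.

Definition norm_inf {R : realDomainType} (n : nat) (b : 'I_n -> R) : R :=
  \big[Num.max/0]_(i < n) `|b i|.

(* ||r||_{-oo} = min_{e in E} |r(e)|  (convention: 0 if E is empty) *)
Definition norm_neginf {R : realDomainType} (n : nat) (E : {set 'I_n * 'I_n})
  (r : 'I_n * 'I_n -> R) : R :=
  if [pick e in E] is Some e0 then \big[Num.min/`|r e0|]_(e in E) `|r e|
  else 0.

(* Main.v *)
Require Import Defs.
From HB Require Import structures.
From mathcomp Require Import all_boot all_order all_algebra.
From mathcomp Require Import reals exp.
Import Order.TTheory GRing.Theory Num.Theory.
Local Open Scope ring_scope.

Lemma sum_out (R : numDomainType) (n : nat) (E : {set 'I_n * 'I_n})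
  (F : 'I_n * 'I_n -> R) (i : 'I_n) :
  \sum_(e in E | e.1 == i) F e = \sum_(j < n) (if (i, j) \in E then F (i, j) else 0).
Proof.
rewrite big_mkcond /=.
transitivity (\sum_(a < n) \sum_(b < n)
   (if ((a, b) \in E) && (a == i) then F (a, b) else 0)).
  by rewrite pair_big /=; apply: eq_bigr; case.
rewrite (bigD1 i) //= [X in _ + X]big1 ?addr0; last first.
  by move=> a /negbTE Ha; apply: big1 => j _; rewrite Ha andbF.
by apply: eq_bigr => j _; rewrite eqxx andbT.
Qed.

Lemma sum_in (R : numDomainType) (n : nat) (E : {set 'I_n * 'I_n})
  (F : 'I_n * 'I_n -> R) (i : 'I_n) :
  \sum_(e in E | e.2 == i) F e = \sum_(j < n) (if (j, i) \in E then F (j, i) else 0).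
Proof.
rewrite big_mkcond /=.
transitivity (\sum_(a < n) \sum_(b < n)
   (if ((a, b) \in E) && (b == i) then F (a, b) else 0)).
  by rewrite pair_big /=; apply: eq_bigr; case.
apply: eq_bigr => a _.
rewrite (bigD1 i) //= big1 ?addr0; last first.
  by move=> b /negbTE Hb; rewrite Hb andbF.
by rewrite eqxx andbT.
Qed.

Theorem mainTheorem19 (R : realType) (n : nat) (E : {set 'I_n * 'I_n})
  (r : 'I_n * 'I_n -> R) (b : 'I_n -> R) (p : R) (f : 'I_n * 'I_n -> R) :
  oriented_simple_graph E ->
  (forall e, e \in E -> 0 < r e) ->
  \sum_(i < n) b i = 0 ->
  1 < p ->
  is_bflow E b f ->
  energy E r f p >= p^-1 * powR (norm_inf b / n%:R) p * norm_neginf E r.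
Proof.
move=> [Hloop Hor] Hr Hb Hp Hf.
have p0 : 0 < p by apply: lt_trans Hp.
set B := norm_inf b.
have B0 : 0 <= B.
  rewrite /B /norm_inf; elim/big_ind: _ => //.
  by move=> x y hx hy; rewrite le_max hx.
have N0 : 0 <= norm_neginf E r.
  rewrite /norm_neginf; case: pickP => [e1 He1|//].
  by apply: le_bigmin => // e _.
have Sg0 : 0 <= \sum_(e in E) r e * powR `|f e| p.
  by apply: sumr_ge0 => e He; rewrite mulr_ge0 ?powR_ge0 // ltW // Hr.
case: (eqVneq B 0) => [->|Bn0].
  rewrite mul0r powR0 ?gt_eqF // mulr0 mul0r /energy.
  by rewrite mulr_ge0 // invr_ge0 ltW.
have Bp : 0 < B by rewrite lt_def Bn0 B0.
have n0 : (0 < n)%N.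
  case: (posnP n) => // n0; exfalso; move: Bn0; rewrite /B /norm_inf.
  suff -> : \big[Num.max/0]_(i < n) `|b i| = 0 by rewrite eqxx.
  apply/eqP; rewrite eq_le; apply/andP; split; last first.
    by elim/big_ind: _ => // x y hx hy; rewrite le_max hx.
  by apply: bigmax_le => // i _; have := ltn_ord i; rewrite {2}n0.
have nR0 : (n%:R : R) != 0 by rewrite pnatr_eq0 -lt0n.
have Bn : 0 < B / n%:R by rewrite divr_gt0 // ltr0n.
have [e0 He0 Hfe] : exists2 e, e \in E & B / n%:R <= `|f e|.
  case: (boolP [exists e in E, B / n%:R <= `|f e|]) => [/exists_inP [e ? ?]|/exists_inPn Hno].
    by exists e.
  exfalso.
  have : B < B.
    rewrite {1}/B /norm_inf; apply: bigmax_lt => // i _.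
    rewrite -(Hf i) /net_outflow.
    apply: le_lt_trans (ler_normB _ _) _.
    apply: le_lt_trans (lerD (ler_norm_sum _ _ _) (ler_norm_sum _ _ _)) _.
    rewrite sum_out sum_in -big_split /=.
    apply: (@lt_le_trans _ _ (\sum_(j < n) B / n%:R)).
      apply: ltr_sum.
        by apply/hasP; exists i; rewrite ?mem_index_enum.
      move=> j _.
      case Hij: ((i, j) \in E); case Hji: ((j, i) \in E).
      - by have := Hor _ _ Hij; rewrite Hji.
      - by rewrite addr0 ltNge; apply: Hno.
      - by rewrite add0r ltNge; apply: Hno.
      - by rewrite addr0.
    by rewrite sumr_const card_ord -[_ *+ n]mulr_natr divfK.
  by rewrite ltxx.
rewrite /energy -!mulrA ler_pM2l ?invr_gt0 //.
rewrite (bigD1 e0) //=.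
rewrite -[X in X <= _]addr0; apply: lerD; last first.
  by apply: sumr_ge0 => e /andP[He _]; rewrite mulr_ge0 ?powR_ge0 // ltW // Hr.
rewrite mulrC ler_pM ?powR_ge0 //.
  rewrite /norm_neginf; case: pickP => [e1 He1|/(_ e0)]; last by rewrite He0.
  apply: le_trans (bigmin_le_cond _ _ He0) _.
  by rewrite gtr0_norm ?Hr.
apply: ge0_ler_powR; [exact: ltW | rewrite nnegrE; exact: ltW | by rewrite nnegrE | exact: Hfe].
Qed.
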